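(* Let $K>0$ and define $\beta_k=(K+1-k)^{-1/2}$ for integers $0\le k\le K$. Suppose a real sequence $(\gamma_k)$ satisfies $\gamma_0\ge\beta_0$ and $\gamma_{k+1}\ge\gamma_k+\gamma_k^3$ for all integers $0\le k\le K-1$. Then $\gamma_k\ge\beta_k$ for all integers $0\le k\le K$. *)

(* Defs.v *)
From Stdlib Require Import Reals.
Open Scope R_scope.

Definition beta (K k : nat) : R := / sqrt (INR K + 1 - INR k).

(* Main.v *)
Require Import Defs.
From Stdlib Require Import Reals Lra Lia Psatz.
Open Scope R_scope.

Lemma step_ineq (m g : R) : 2 <= m -> g >= / sqrt m -> g + g ^ 3 >= / sqrt (m - 1).
Proof.
  intros Hm Hg.
  set (sa := sqrt m). set (tb := sqrt (m - 1)).
  assert (Hs2 : sa * sa = m) by (apply sqrt_sqrt; lra).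
  assert (Ht2 : tb * tb = m - 1) by (apply sqrt_sqrt; lra).
  assert (Hs : 0 < sa) by (apply sqrt_lt_R0; lra).
  assert (Ht : 0 < tb) by (apply sqrt_lt_R0; lra).
  set (a := / sa).
  assert (Ha : 0 < a) by (apply Rinv_0_lt_compat; lra).
  assert (Has : a * sa = 1) by (unfold a; field; lra).
  assert (H1 : g + g ^ 3 >= a + a ^ 3).
  { assert (Hga0 : g >= a) by exact Hg. assert (Hga : g - a >= 0) by lra.
    assert (Hq : g*g + g*a + a*a >= 0) by nra.
    assert (Hp : (g - a) * (g*g + g*a + a*a) >= 0).
    { apply Rle_ge, Rmult_le_pos; lra. }
    replace (g + g ^ 3) with ((a + a^3) + (g - a) + (g - a) * (g*g + g*a + a*a)) by ring.
    lra. }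
  assert (H2 : tb * (m + 1) >= sa * m).
  { assert (Hsq : (tb * (m + 1)) * (tb * (m + 1)) >= (sa * m) * (sa * m)).
    { replace ((tb * (m + 1)) * (tb * (m + 1))) with ((tb*tb) * ((m+1)*(m+1))) by ring.
      replace ((sa * m) * (sa * m)) with ((sa*sa) * (m*m)) by ring.
      rewrite Hs2, Ht2. nra. }
    destruct (Rlt_or_le (tb * (m + 1)) (sa * m)) as [Hlt|Hle]; [|lra].
    assert (0 < tb * (m + 1)) by (apply Rmult_lt_0_compat; lra).
    assert ((tb * (m + 1)) * (tb * (m + 1)) < (sa * m) * (sa * m)).
    { apply Rmult_le_0_lt_compat; lra. }
    lra. }
  assert (H3 : a + a ^ 3 >= / tb).
  { assert (E : a + a ^ 3 = (m + 1) / (sa * m)).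
    { unfold a. rewrite <- Hs2. field. lra. }
    rewrite E. apply Rle_ge.
    assert (Hp : 0 < tb * (sa * m)) by (apply Rmult_lt_0_compat; [lra| apply Rmult_lt_0_compat; lra]).
    assert (D : (m + 1) / (sa * m) - / tb = (tb * (m + 1) - sa * m) / (tb * (sa * m))).
    { field. repeat split; lra. }
    assert (0 <= (tb * (m + 1) - sa * m) / (tb * (sa * m))).
    { unfold Rdiv. apply Rmult_le_pos; [lra|]. left. apply Rinv_0_lt_compat. exact Hp. }
    lra. }
  lra.
Qed.

Theorem mainTheorem10 (K : nat) (gamma : nat -> R) :
  (0 < K)%nat ->
  gamma 0%nat >= beta K 0 ->
  (forall k : nat, (k <= K - 1)%nat -> gamma (S k) >= gamma k + gamma k ^ 3) ->
  forall k : nat, (k <= K)%nat -> gamma k >= beta K k.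
Proof.
  intros HK H0 Hrec k. induction k as [|k IH]; intros Hk.
  - exact H0.
  - assert (Hk' : (k <= K - 1)%nat) by lia.
    specialize (IH ltac:(lia)). specialize (Hrec k Hk').
    unfold beta in *.
    assert (HI : INR k + 1 <= INR K).
    { rewrite <- S_INR. apply le_INR. lia. }
    pose proof (step_ineq (INR K + 1 - INR k) (gamma k) ltac:(lra) IH) as St.
    rewrite S_INR.
    replace (INR K + 1 - (INR k + 1)) with (INR K + 1 - INR k - 1) by ring.
    lra.
Qed.
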